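(* Let $G$ be a graph having a component with at least two cycles, and let $F$ be a subgraph of $G$. The following are equivalent: (a1) $F=[G]$, the core of $G$; (a2) $F$ is the unique maximum (with respect to the subgraph relation) element among the subgraphs of $G$ that are cacti-graphs; (a3) letting $G'$ be the graph obtained from $G$ by removing all tree components, $F$ is the only subgraph of $G$ that is a cacti-graph and satisfies $\Delta F=\Delta G'$.
   Context: Graphs are finite, may have loops and parallel edges, and have no isolated vertices unless stated otherwise. A leaf is a vertex incident to exactly one edge, which is not a loop. $\Delta G=|E(G)|-|V(G)|$. For $X\subseteq E(G)$, $G\langle X\rangle$ is the subgraph with edge set $X$ and vertex set the vertices incident to edges of $X$. A cycle is a connected graph all of whose vertices have degree 2 (a loop contributes 2). A cacti-graph is a graph with no isolated vertices, no leaves, and no component that is a cycle. For a connected graph $A$ containing a cycle, its kernel $\lfloor A\rfloor$ is the subgraph obtained from $A$ by repeatedly deleting leaves (with their incident edges) until no leaf remains; equivalently $\lfloor A\rfloor=A\langle X\rangle$ where $X$ is the inclusion-minimum nonempty subset of $E(A)$ with $\Delta A\langle X\rangle=\Delta A$. If $G$ has a component with at least two cycles, the core $[G]$ of $G$ is the union of the kernels $\lfloor A\rfloor$ over the components $A$ of $G$ with $\Delta A\ge1$ (i.e. with at least two cycles). *)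

(* Defs.v *)
From HB Require Import structures.
From mathcomp Require Import all_boot all_order all_algebra.
Set Implicit Arguments. Unset Strict Implicit. Unset Printing Implicit Defensive.
Import Order.TTheory GRing.Theory Num.Theory.

(* A graph G is given by a finite vertex type V, a finite edge type E and an
   endpoint map ends : E -> V * V (the order of the pair is irrelevant;
   ends e = (v, v) is a loop).  A subgraph without isolated vertices is
   determined by its edge set X : {set E}; it is G<X>, whose vertex set is
   the set of vertices incident to edges of X. *)
Section Graph.
Variables (V E : finType) (ends : E -> V * V).

Definition inc (v : V) (e : E) : bool := ((ends e).1 == v) || ((ends e).2 == v).
Definition is_loop (e : E) : bool := (ends e).1 == (ends e).2.

Definition verts (X : {set E}) : {set V} := [set v | [exists e in X, inc v e]].

Definition Delta (X : {set E}) : int := (#|X|%:Z - #|verts X|%:Z)%R.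

(* degree in G<X>; a loop contributes 2 *)
Definition deg (X : {set E}) (v : V) : nat :=
  \sum_(e in X) (((ends e).1 == v) + ((ends e).2 == v)).

Definition adj (X : {set E}) : rel V :=
  fun u v => [exists e in X, (ends e == (u, v)) || (ends e == (v, u))].

Definition connectedb (X : {set E}) : bool :=
  (X != set0) && [forall u in verts X, forall v in verts X, connect (adj X) u v].

Definition is_cycle (X : {set E}) : bool :=
  connectedb X && [forall v in verts X, deg X v == 2].

Definition is_leaf (X : {set E}) (v : V) : bool :=
  (#|[set e in X | inc v e]| == 1) && [forall e in X, inc v e ==> ~~ is_loop e].

Definition is_component (X C : {set E}) : bool :=
  [&& C \subset X, connectedb C &
      [forall e in X, [exists v in verts C, inc v e] ==> (e \in C)]].

Definition two_cycles (A : {set E}) : bool :=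
  [exists C1 : {set E}, exists C2 : {set E},
     [&& C1 != C2, C1 \subset A, C2 \subset A, is_cycle C1 & is_cycle C2]].

Definition is_tree (A : {set E}) : bool :=
  connectedb A && [forall C : {set E}, (C \subset A) ==> ~~ is_cycle C].

(* cacti-graph: no isolated vertices (automatic for G<X>), no leaves,
   no component that is a cycle *)
Definition cacti (X : {set E}) : bool :=
  [forall v, ~~ is_leaf X v] &&
  [forall C : {set E}, is_component X C ==> ~~ is_cycle C].

Definition is_kernel (A K : {set E}) : bool :=
  [&& K != set0, K \subset A, Delta K == Delta A &
      [forall K' : {set E},
         [&& K' != set0, K' \subset A & Delta K' == Delta A] ==> (K \subset K')]].

Definition core : {set E} :=
  [set e | [exists A : {set E},
     [&& is_component setT A, (1 <= Delta A)%R &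
         [exists K : {set E}, is_kernel A K && (e \in K)]]]].

Definition nontree_part : {set E} :=
  [set e | [exists A : {set E},
     [&& is_component setT A, ~~ is_tree A & e \in A]]].

End Graph.

(* Main.v *)
Require Import Defs.
From HB Require Import structures.
From mathcomp Require Import all_boot all_order all_algebra.
From mathcomp Require Import zify.
Import Order.TTheory GRing.Theory Num.Theory.
Set Implicit Arguments. Unset Strict Implicit. Unset Printing Implicit Defensive.

Section Main.
Variables (V E : finType) (ends : E -> V * V).
Local Notation inc := (inc ends).
Local Notation verts := (verts ends).
Local Notation D := (Delta ends).
Local Notation deg := (deg ends).
Local Notation adj := (adj ends).
Implicit Types (X Y Z A C K : {set E}) (v : V) (e : E).

Lemma vertsP v X : reflect (exists2 e, e \in X & inc v e) (v \in verts X).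
Proof. rewrite inE; apply: (iffP existsP) => [[e /andP[]]|[e he hv]]; last by exists e; rewrite he.
by exists e. Qed.

Lemma inc1 e : inc (ends e).1 e. Proof. by rewrite /Defs.inc eqxx. Qed.
Lemma inc2 e : inc (ends e).2 e. Proof. by rewrite /Defs.inc eqxx orbT. Qed.

Lemma verts_sub X Y : X \subset Y -> verts X \subset verts Y.
Proof. move=> /subsetP h; apply/subsetP => v /vertsP[e /h he hv]; apply/vertsP; by exists e. Qed.

Lemma vertsU X Y : verts (X :|: Y) = verts X :|: verts Y.
Proof. apply/setP => v; apply/vertsP/setUP.
- by move=> [e /setUP[] he hv]; [left|right]; apply/vertsP; exists e.
- by case=> /vertsP[e he hv]; exists e => //; rewrite inE he ?orbT. Qed.

Lemma verts0 : verts set0 = set0.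
Proof. by apply/setP => v; rewrite in_set0; apply/negbTE/negP => /vertsP[e]; rewrite inE. Qed.

Lemma D0 : D set0 = 0%R.
Proof. by rewrite /Delta verts0 !cards0. Qed.

Lemma verts1 e : verts [set e] = [set (ends e).1; (ends e).2].
Proof. apply/setP => v; apply/vertsP/set2P.
- by move=> [f]; rewrite inE => /eqP-> /orP[]/eqP->; [left|right].
- by case=> ->; exists e; rewrite ?inE ?inc1 ?inc2. Qed.

Lemma card_verts_subset X Y : X \subset Y -> (#|verts X| <= #|verts Y|)%N.
Proof. by move=> h; apply/subset_leq_card/verts_sub. Qed.

Lemma Dsuper X Y : (D X + D Y <= D (X :|: Y) + D (X :&: Y))%R.
Proof.
have h1 := cardsUI X Y.
have h2 := cardsUI (verts X) (verts Y).
have h3 : (#|verts (X :&: Y)| <= #|verts X :&: verts Y|)%N.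
  apply/subset_leq_card; rewrite subsetI !verts_sub // ?subsetIl ?subsetIr //.
rewrite /Delta vertsU; lia.
Qed.

Lemma disj_edges X Y : [disjoint verts X & verts Y] -> X :&: Y = set0.
Proof. move=> hd; apply/setP => e; rewrite !inE; apply/negP => /andP[hx hy].
have h1 : (ends e).1 \in verts X by apply/vertsP; exists e => //; apply inc1.
have h2 : (ends e).1 \in verts Y by apply/vertsP; exists e => //; apply inc1.
by move: hd => /disjoint_setI0/setP/(_ (ends e).1); rewrite in_setI h1 h2 in_set0.
Qed.

Lemma Dadd X Y : [disjoint verts X & verts Y] -> D (X :|: Y) = (D X + D Y)%R.
Proof.
move=> hd; have h0 := disj_edges hd.
have h1 := cardsUI X Y. have h2 := cardsUI (verts X) (verts Y).
move: hd => /disjoint_setI0 hd.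
rewrite h0 cards0 in h1; rewrite hd cards0 in h2.
rewrite /Delta vertsU; lia.
Qed.


Definition wt e v : nat := ((ends e).1 == v) + ((ends e).2 == v).

Lemma degE X v : deg X v = \sum_(e in X) wt e v. Proof. by []. Qed.

Lemma wt_inc e v : (inc v e <= wt e v)%N.
Proof. by rewrite /wt /Defs.inc; case: eqP; case: eqP. Qed.

Lemma wt0 e v : ~~ inc v e -> wt e v = 0%N.
Proof. by rewrite /wt /Defs.inc negb_or => /andP[/negbTE-> /negbTE->]. Qed.

Lemma wt_loop e v : inc v e -> is_loop ends e -> wt e v = 2%N.
Proof. by rewrite /wt /Defs.inc /is_loop => /orP[]/eqP<- /eqP->; rewrite eqxx. Qed.

Lemma deg_sum X : (\sum_v deg X v = 2 * #|X|)%N.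
Proof.
rewrite /Defs.deg exchange_big /= -sum1_card big_distrr /=; apply: eq_bigr => e _.
rewrite big_split /= muln1.
have h a : (\sum_(v : V) (a == v) = 1)%N.
  by rewrite (bigD1 a) //= eqxx big1 // => v /negbTE; rewrite eq_sym => ->.
by rewrite !h.
Qed.

Lemma deg_ge_e X v e : e \in X -> (wt e v <= deg X v)%N.
Proof. by move=> he; rewrite degE (bigD1 e) //= leq_addr. Qed.

Lemma deg_ge_inc X v : (#|[set e in X | inc v e]| <= deg X v)%N.
Proof.
rewrite degE -sum1_card (big_mkcond (fun e => e \in _)) (big_mkcond (fun e => e \in X)) /=.
apply: leq_sum => e _; rewrite !inE; case: (e \in X) => //=.
by have := wt_inc e v; case: (inc v e).
Qed.

Lemma deg_out X v : v \notin verts X -> deg X v = 0%N.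
Proof. move=> hv; rewrite degE big1 // => e he; apply: wt0; apply/negP => hi.
by case/negP: hv; apply/vertsP; exists e. Qed.

Lemma deg_in X v : v \in verts X -> (0 < deg X v)%N.
Proof. case/vertsP => e he hi; apply: leq_trans (deg_ge_e v he).
by apply: leq_trans (wt_inc e v); rewrite hi. Qed.

Lemma noleaf_deg X v : ~~ is_leaf ends X v -> v \in verts X -> (2 <= deg X v)%N.
Proof.
move=> hl hv; rewrite leqNgt; apply/negP => hd.
case/negP: hl; apply/andP; split.
- rewrite eqn_leq; apply/andP; split.
    by apply: leq_trans (deg_ge_inc X v) _; rewrite -ltnS.
  case/vertsP: hv => e he hi; rewrite card_gt0; apply/set0Pn; exists e; by rewrite inE he.
- apply/forallP => e; apply/implyP => he; apply/implyP => hi; apply/negP => hlp.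
  have := deg_ge_e v he; rewrite wt_loop // => h2.
  by have := leq_ltn_trans h2 hd.
Qed.

Lemma deg_split X Y w : X \subset Y -> w \notin verts X -> deg Y w = deg (Y :\: X) w.
Proof.
move=> hXY hw; rewrite !degE (bigID (mem X)) /= big1 ?add0n.
  by apply: eq_bigl => e; rewrite !inE andbC.
move=> e /andP[_ hx]; apply: wt0; apply/negP => hi; case/negP: hw; apply/vertsP; by exists e.
Qed.

Lemma T3 X Y : X \subset Y -> (forall v, v \in verts Y -> 2 <= deg Y v)%N ->
  (D X <= D Y)%R /\
  ((exists2 d, d \in Y :\: X & exists2 v, v \in verts X & inc v d) -> (D X < D Y)%R).
Proof.
move=> hXY hdeg.
set W := verts Y :\: verts X; set Dd := Y :\: X.
have key : (2 * #|W| + \sum_(v in verts X) deg Dd v <= 2 * #|Dd|)%N.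
  rewrite -(deg_sum Dd) [X in (_ <= X)%N](bigID (mem W)) /=; apply: leq_add.
    rewrite -sum1_card big_distrr /= muln1; apply: leq_sum => v.
    rewrite inE => /andP[hvX hvY]; rewrite -deg_split //; exact: hdeg.
  rewrite (bigID (fun v => v \in verts X) (fun v => v \notin W)) /=.
  apply: leq_trans (leq_addr _ _); apply: eq_leq; apply: eq_bigl => v.
  by rewrite /W in_setD; case: (boolP (v \in verts X)) => h /=; rewrite ?andbF.
have hc1 : #|Y| = (#|X| + #|Dd|)%N.
  by rewrite /Dd cardsD (setIidPr hXY); have := subset_leq_card hXY; lia.
have hc2 : #|verts Y| = (#|verts X| + #|W|)%N.
  by rewrite /W cardsD (setIidPr (verts_sub hXY)); have := subset_leq_card (verts_sub hXY); lia.
split; first by rewrite /Delta hc1 hc2; lia.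
case=> d hd [v hv hi].
have : (0 < \sum_(v in verts X) deg Dd v)%N.
  rewrite (bigD1 v) //=; apply: leq_trans (leq_addr _ _); apply: deg_in; apply/vertsP; by exists d.
rewrite /Delta hc1 hc2; lia.
Qed.

Lemma adjP X u v : reflect (exists2 e, e \in X & (ends e == (u,v)) || (ends e == (v,u))) (adj X u v).
Proof. by apply: (iffP exists_inP) => -[e h1 h2]; exists e. Qed.

Lemma adj_sym X : symmetric (adj X).
Proof. move=> u v; apply/adjP/adjP => -[e h1 h2]; exists e => //; by rewrite orbC. Qed.

Lemma adj_inc X u v : adj X u v -> exists2 e, e \in X & inc u e && inc v e.
Proof. case/adjP => e he /orP[]/eqP h; exists e => //; by rewrite /Defs.inc h /= !eqxx ?orbT. Qed.

Lemma adj_e X e : e \in X -> adj X (ends e).1 (ends e).2.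
Proof. move=> he; apply/adjP; exists e => //; by rewrite -surjective_pairing eqxx. Qed.

Lemma inc_adj X e v : e \in X -> inc v e -> connect (adj X) (ends e).1 v.
Proof. move=> he /orP[]/eqP<-; first exact: connect0. by apply: connect1; apply: adj_e. Qed.

Lemma conn_sym X u v : connect (adj X) u v = connect (adj X) v u.
Proof. by apply: sym_connect_sym; apply: adj_sym. Qed.

Lemma conn_mono X Y u v : X \subset Y -> connect (adj X) u v -> connect (adj Y) u v.
Proof. move=> hs; apply: connect_sub => x y /adjP[e he h]; apply: connect1; apply/adjP.
by exists e => //; apply: (subsetP hs). Qed.

Lemma conn_fwd (r : rel V) (a : pred V) x y :
  (forall x y, r x y -> a x -> a y) -> connect r x y -> a x -> a y.
Proof. move=> cl /connectP[p hp ->]; elim: p x hp => //= z p IH x /andP[hxz hp] hx.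
exact: IH hp (cl _ _ hxz hx). Qed.

Lemma connP X : connectedb ends X ->
  X != set0 /\ forall u v, u \in verts X -> v \in verts X -> connect (adj X) u v.
Proof. case/andP => h0 /forallP h; split => // u v hu hv.
by move: (h u) => /implyP/(_ hu)/forallP/(_ v)/implyP/(_ hv). Qed.

Lemma touch A X : connectedb ends A -> X \subset A -> X != set0 -> X != A ->
  exists2 d, d \in A :\: X & exists2 v, v \in verts X & inc v d.
Proof.
move=> /connP[_ hA] hXA hX0 hXA'.
case: (boolP [exists d in A :\: X, [exists v in verts X, inc v d]]).
  by case/exists_inP => d hd /exists_inP[v hv hi]; exists d => //; exists v.
rewrite negb_exists_in => /forall_inP hn.
have cl : forall x y, adj A x y -> x \in verts X -> y \in verts X.
  move=> x y /adj_inc[g hg /andP[hx hy]] hxX.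
  case: (boolP (g \in X)) => hgX; first by apply/vertsP; exists g.
  have := hn g; rewrite inE hgX hg => /(_ isT) /exists_inP; case; by exists x.
have [f hf] : exists f, f \in A :\: X.
  apply/set0Pn; rewrite setD_eq0; apply: contra hXA' => h; by rewrite eqEsubset hXA h.
case/set0Pn: hX0 => e he.
have hfA : f \in A by move: hf; rewrite inE => /andP[].
have hc : connect (adj A) (ends e).1 (ends f).1.
  apply: hA; apply/vertsP; [exists e; rewrite ?inc1 //; exact: (subsetP hXA) | exists f; rewrite ?inc1 //].
have := conn_fwd cl hc; rewrite /=.
have -> : (ends e).1 \in verts X by apply/vertsP; exists e; rewrite ?inc1.
move=> /(_ isT) hv; have := hn f hf; case/negP; apply/exists_inP; exists (ends f).1 => //; exact: inc1.
Qed.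

Lemma Dadd1 X d v : d \notin X -> v \in verts X -> inc v d -> (D X <= D (d |: X))%R.
Proof.
move=> hd hv hi.
have h1 : #|d |: X| = (#|X|).+1 by rewrite cardsU1 hd.
have hsub : verts (d |: X) \subset (if (ends d).1 == v then (ends d).2 else (ends d).1) |: verts X.
  rewrite vertsU verts1; apply/subsetP => w; rewrite !in_setU !in_set1 => /orP[/orP[]/eqP->|->]; last by rewrite !orbT.
  - case: (eqVneq (ends d).1 v) => [e1|n1]; last by rewrite eqxx.
    by rewrite e1 hv orbT.
  - case: (eqVneq (ends d).1 v) => [e1|n1]; first by rewrite eqxx.
    by move: hi; rewrite /Defs.inc (negbTE n1) /= => /eqP ->; rewrite hv orbT.
have := subset_leq_card hsub; rewrite cardsU1 /Delta h1.
have := leq_b1 (_ \notin verts X); lia.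
Qed.

Lemma Gl A X : connectedb ends A -> X \subset A -> X != set0 -> (D X <= D A)%R.
Proof.
move=> hA; move hn : #|A :\: X| => n; elim: n X hn => [|n IH] X hn hXA hX0.
  by move: hn => /eqP; rewrite cards_eq0 setD_eq0 => hAX; rewrite (_ : X = A) //; apply/eqP; rewrite eqEsubset hXA hAX.
have hne : X != A by apply/eqP => hXA'; move: hn; rewrite hXA' setDv cards0.
have [d hd [v hv hi]] := touch hA hXA hX0 hne.
move: (hd); rewrite inE => /andP[hdX hdA].
apply: le_trans (Dadd1 hdX hv hi) _; apply: IH.
- have : A :\: (d |: X) = (A :\: X) :\ d.
    by apply/setP => w; rewrite !inE; case: (w == d); rewrite ?andbF.
  move=> ->; rewrite (cardsD1 d (A :\: X)) hd in hn; by move: hn; rewrite add1n => -[].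
- by rewrite subUset sub1set hdA hXA.
- by apply/set0Pn; exists d; rewrite !inE eqxx.
Qed.


Lemma compP X C : is_component ends X C ->
  [/\ C \subset X, connectedb ends C &
      forall f v, f \in X -> v \in verts C -> inc v f -> f \in C].
Proof.
case/and3P => h1 h2 /forall_inP h3; split => // f v hf hv hi.
by apply: (implyP (h3 f hf)); apply/exists_inP; exists v.
Qed.

Lemma comp_split X C : is_component ends X C -> [disjoint verts C & verts (X :\: C)].
Proof.
case/compP => _ _ hcl; rewrite -setI_eq0; apply/eqP/setP => w; rewrite in_setI in_set0.
apply/negP => /andP[hw /vertsP[f]]; rewrite inE => /andP[hfC hfX] hi.
by rewrite (hcl f w hfX hw hi) in hfC.
Qed.

Definition cmp X e := [set f in X | connect (adj X) (ends e).1 (ends f).1].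

Lemma comp_in X e : e \in X -> e \in cmp X e.
Proof. by move=> he; rewrite inE he connect0. Qed.

Lemma comp_sub X e : cmp X e \subset X.
Proof. by apply/subsetP => f; rewrite inE => /andP[]. Qed.

Lemma comp_verts X e w : w \in verts (cmp X e) -> connect (adj X) (ends e).1 w.
Proof. case/vertsP => f; rewrite inE => /andP[hf hc] hi.
by apply: connect_trans hc (inc_adj hf hi). Qed.

Lemma comp_comp X e : e \in X -> is_component ends X (cmp X e).
Proof.
move=> he; set C := cmp X e.
have hCX : C \subset X := comp_sub X e.
have L : forall y, connect (adj X) (ends e).1 y -> connect (adj C) (ends e).1 y.
  move=> y hy; apply: (conn_fwd (a := fun y => connect (adj C) (ends e).1 y) _ hy (connect0 _ _)).
  move=> x z /adjP[g hg hgo] hx.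
  have hx' := conn_mono hCX hx.
  have hgC : g \in C.
    rewrite inE hg; case/orP: (hgo) => /eqP hge; rewrite hge /=; first by [].
    by apply: connect_trans hx' (connect1 _); apply/adjP; exists g.
  by apply: connect_trans hx (connect1 _); apply/adjP; exists g.
apply/and3P; split => //.
- apply/andP; split; first by apply/set0Pn; exists e; apply: comp_in.
  apply/forall_inP => u hu; apply/forall_inP => v hv.
  apply: connect_trans (_ : connect (adj C) u (ends e).1) _.
    by rewrite conn_sym; apply/L/comp_verts.
  by apply/L/comp_verts.
- apply/forall_inP => f hf; apply/implyP => /exists_inP[v hv hi].
  rewrite inE hf; apply: connect_trans (comp_verts hv) _.
  by rewrite conn_sym; apply: inc_adj.
Qed.

Lemma comp_uniq X A e : is_component ends X A -> e \in A -> A = cmp X e.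
Proof.
move=> hA heA; case/compP: (hA) => hAX /connP[_ hcon] hcl.
apply/eqP; rewrite eqEsubset; apply/andP; split; apply/subsetP => f.
- move=> hf; rewrite /cmp inE (subsetP hAX _ hf) /=; apply: conn_mono hAX _; apply: hcon;
  apply/vertsP; [by exists e; rewrite ?inc1 | by exists f; rewrite ?inc1].
- rewrite /cmp inE => /andP[hfX hc].
  have cl : forall x y, adj X x y -> x \in verts A -> y \in verts A.
    move=> x y /adj_inc[g hg /andP[hx hy]] hxA; apply/vertsP; exists g => //.
    exact: hcl hg hxA hx.
  have h1 : (ends e).1 \in verts A by apply/vertsP; exists e; rewrite ?inc1.
  have := conn_fwd cl hc h1 => h2; exact: hcl hfX h2 (inc1 f).
Qed.

Lemma comp_disj X A B : is_component ends X A -> is_component ends X B -> A != B ->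
  [disjoint verts A & verts B].
Proof.
move=> hA hB hne; rewrite -setI_eq0; apply/eqP/setP => w; rewrite in_setI in_set0.
apply/negP => /andP[hwA /vertsP[f hfB hi]].
case/compP: (hA) => _ _ hclA; case/compP: (hB) => hBX _ _.
have hfA := hclA f w (subsetP hBX _ hfB) hwA hi.
by case/eqP: hne; rewrite (comp_uniq hA hfA) (comp_uniq hB hfB).
Qed.


Lemma sum_deg_verts X : (\sum_v deg X v = \sum_(v in verts X) deg X v)%N.
Proof. rewrite (bigID (fun v => v \in verts X)) /= [X in (_ + X)%N]big1 ?addn0 //.
by move=> v /deg_out. Qed.

Lemma deg_count X : (forall v, v \in verts X -> 2 <= deg X v)%N ->
  (#|verts X| <= #|X|)%N /\
  (#|verts X| = #|X| -> forall v, v \in verts X -> deg X v = 2%N).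
Proof.
move=> hd.
have hs := deg_sum X; rewrite sum_deg_verts in hs.
have hge : (2 * #|verts X| <= \sum_(v in verts X) deg X v)%N.
  by rewrite -sum1_card big_distrr /= muln1; apply: leq_sum.
split; first by lia.
move=> heq v hv; apply/eqP; rewrite eqn_leq hd // andbT leqNgt; apply/negP => h3.
have : (2 * #|verts X| < \sum_(v in verts X) deg X v)%N.
  rewrite (bigD1 v) //= (cardsD1 v (verts X)) hv.
  have : (2 * #|verts X :\ v| <= \sum_(i in verts X | i != v) deg X i)%N.
    rewrite -sum1_card big_distrr /= muln1.
    rewrite (eq_bigl (fun i => (i \in verts X) && (i != v))); last by move=> i; rewrite !inE andbC.
    apply: leq_sum => i /andP[hi _]; exact: hd.
  lia.
lia.
Qed.

Lemma cycle_D C : is_cycle ends C -> D C = 0%R /\ (forall v, v \in verts C -> deg C v = 2%N).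
Proof.
case/andP => _ /forall_inP h.
have hd : forall v, v \in verts C -> deg C v = 2%N by move=> v /h /eqP.
split=> //; have hs := deg_sum C; rewrite sum_deg_verts in hs.
rewrite (eq_bigr (fun _ => 2%N)) in hs; last by move=> v; apply: hd.
by rewrite sum_nat_const in hs; rewrite /Delta; lia.
Qed.

Lemma noleaf_D C : connectedb ends C -> (forall v, ~~ is_leaf ends C v) -> ~~ is_cycle ends C ->
  (1 <= D C)%R.
Proof.
move=> hc hl hnc.
have hd : forall v, v \in verts C -> (2 <= deg C v)%N by move=> v; apply: noleaf_deg.
have [h1 h2] := deg_count hd.
case: (eqVneq #|verts C| #|C|) => he.
  case/negP: hnc; apply/andP; split => //; apply/forall_inP => v hv; by rewrite h2.
rewrite /Delta; lia.
Qed.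

Lemma kernelP A K : is_kernel ends A K ->
  [/\ K != set0, K \subset A, D K = D A &
      forall K', K' != set0 -> K' \subset A -> D K' = D A -> K \subset K'].
Proof.
case/and4P => h1 h2 /eqP h3 /forallP h4; split => // K' a b c.
by apply: (implyP (h4 K')); rewrite a b c eqxx.
Qed.

Lemma kernel_exists A : connectedb ends A -> (1 <= D A)%R -> exists K, is_kernel ends A K.
Proof.
move=> hA h1.
pose P K := [&& K != set0, K \subset A & D K == D A].
have hA0 : A != set0 by case/andP: hA.
have PI : forall K1 K2, P K1 -> P K2 -> P (K1 :&: K2).
  move=> K1 K2 /and3P[a1 b1 /eqP c1] /and3P[a2 b2 /eqP c2].
  have hsup := Dsuper K1 K2.
  have hU : (D (K1 :|: K2) <= D A)%R.
    apply: Gl => //; first by rewrite subUset b1 b2.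
    by apply: contraNneq a1; move/setP => h; apply/eqP/setP => x; have := h x; rewrite !inE; case: (x \in K1).
  have hI : (D A <= D (K1 :&: K2))%R by move: hsup hU; rewrite c1 c2; lia.
  have hI0 : K1 :&: K2 != set0.
    by apply: contraTneq hI => ->; rewrite D0 -ltNge; apply: lt_le_trans h1.
  have hIs : K1 :&: K2 \subset A by apply: subset_trans (subsetIl _ _) b1.
  apply/and3P; split => //; apply/eqP; apply: le_anti; rewrite hI andbT; exact: Gl.
have ex : exists n, [exists K, P K && (#|K| == n)].
  by exists #|A|; apply/existsP; exists A; rewrite /P hA0 subxx !eqxx.
case: (ex_minnP ex) => n /existsP[K /andP[hK /eqP hn]] hmin.
exists K; case/and3P: (hK) => a b c; apply/and4P; split => //.
apply/forallP => K'; apply/implyP => hK'.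
have hKI := PI _ _ hK hK'.
have : (n <= #|K :&: K'|)%N by apply: hmin; apply/existsP; exists (K :&: K'); rewrite hKI eqxx.
rewrite -hn => hle.
have : K :&: K' == K by rewrite eqEcard subsetIl hle.
by move/eqP => <-; rewrite subsetIr.
Qed.

Lemma kernel_uniq A K1 K2 : is_kernel ends A K1 -> is_kernel ends A K2 -> K1 = K2.
Proof.
case/kernelP => a1 b1 c1 d1; case/kernelP => a2 b2 c2 d2.
by apply/eqP; rewrite eqEsubset d1 // d2.
Qed.

Lemma kernel_noleaf A K v : connectedb ends A -> (1 <= D A)%R -> is_kernel ends A K ->
  ~~ is_leaf ends K v.
Proof.
move=> hA h1 hK; case/kernelP: (hK) => a b c d.
apply/negP => /andP[/cards1P[e he] _].
have heK : e \in K by move/setP: he => /(_ e); rewrite !inE eqxx => /andP[].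
have hev : inc v e by move/setP: he => /(_ e); rewrite !inE eqxx => /andP[].
set K' := K :\ e.
have hvK' : v \notin verts K'.
  apply/negP => /vertsP[f]; rewrite /K' in_setD1 => /andP[hfe hfK] hi.
  by move/setP: he => /(_ f); rewrite !inE hfK hi (negbTE hfe).
have hvK : v \in verts K by apply/vertsP; exists e.
have hsub : verts K' \proper verts K.
  by rewrite properE verts_sub ?subD1set //=; apply/subsetPn; exists v.
have hcK : #|K| = (#|K'|).+1 by rewrite (cardsD1 e K) heK.
have hge : (D K <= D K')%R by have := proper_card hsub; rewrite /Delta hcK; lia.
have hK'0 : K' != set0.
  by apply: contraTneq hge => ->; rewrite D0 c -ltNge; apply: lt_le_trans h1.
have hK'A : K' \subset A by apply: subset_trans (subD1set _ _) b.
have hle := Gl hA hK'A hK'0.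
have := d K' hK'0 hK'A (le_anti _); rewrite hle /= -c hge => /(_ isT) /subsetP /(_ e heK).
by rewrite !inE eqxx.
Qed.


Lemma cycle_exists X : X != set0 -> (0 <= D X)%R -> exists2 C : {set E}, C \subset X & is_cycle ends C.
Proof.
move=> hX0 hX.
pose P Z := [&& Z != set0, Z \subset X & (0 <= D Z)%R].
have ex : exists n, [exists Z, P Z && (#|Z| == n)].
  by exists #|X|; apply/existsP; exists X; rewrite /P hX0 subxx hX eqxx.
case: (ex_minnP ex) => n /existsP[Z /andP[hZ /eqP hn]] hmin.
case/and3P: hZ => hZ0 hZX hZD.
exists Z => //.
have nosmall : forall Y, Y \proper Z -> Y != set0 -> (D Y < 0)%R.
  move=> Y hY hY0; rewrite ltNge; apply/negP => hYD.
  have : (n <= #|Y|)%N.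
    apply: hmin; apply/existsP; exists Y; rewrite /P hY0 hYD eqxx andbT /=.
    by rewrite andbT; apply: subset_trans (proper_sub hY) hZX.
  by rewrite -hn leqNgt (proper_card hY).
case: (boolP (#|Z| == 1%N)) => hc1.
  case/cards1P: hc1 => e he; subst Z.
  move: hZD; rewrite /Delta verts1 cards1 cards2.
  case: (eqVneq (ends e).1 (ends e).2) => hl // _.
  have hv : verts [set e] = [set (ends e).1] by rewrite verts1 hl setUid.
  apply/andP; split.
    apply/andP; split => //; apply/forall_inP => u; rewrite hv inE => /eqP ->.
    by apply/forall_inP => w; rewrite inE => /eqP ->; apply: connect0.
  apply/forall_inP => u; rewrite hv inE => /eqP ->.
  by rewrite degE big_set1 /wt -hl eqxx.
have hrem : forall e, e \in Z -> Z :\ e != set0 /\ (D (Z :\ e) < 0)%R.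
  move=> e he.
  have h0 : Z :\ e != set0.
    apply: contra hc1 => /eqP h; rewrite (cardsD1 e Z) he h cards0.
    by [].
  split=> //; apply: nosmall h0; rewrite properE subD1set /=; apply/subsetPn; exists e => //.
  by rewrite !inE eqxx.
have hvs : forall e, e \in Z -> verts (Z :\ e) = verts Z.
  move=> e he; apply/eqP; rewrite eqEsubset verts_sub ?subD1set //=.
  apply/negPn/negP => hns.
  have hp : verts (Z :\ e) \proper verts Z by rewrite properE verts_sub ?subD1set //= hns.
  have := proper_card hp; have [_ hlt] := hrem e he.
  have := cardsD1 e Z; rewrite he; move: hlt hZD; rewrite /Delta; lia.
have [e0 he0] := set0Pn _ hZ0.
have hD0 : D Z = 0%R.
  have [_ hlt] := hrem e0 he0; move: hlt hZD; rewrite /Delta hvs // (cardsD1 e0 Z) he0; lia.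
have hdeg : forall v, v \in verts Z -> (2 <= deg Z v)%N.
  move=> v hv; case/vertsP: (hv) => e he hi.
  move: hv; rewrite -(hvs e he) => /vertsP[f]; rewrite in_setD1 => /andP[hfe hf] hfi.
  apply: leq_trans (deg_ge_inc Z v); apply: leq_trans (_ : #|[set e; f]| <= _)%N.
    by rewrite cards2 eq_sym hfe.
  by apply/subset_leq_card/subsetP => g; rewrite !inE => /orP[]/eqP->; rewrite ?he ?hf ?hi ?hfi.
have [_ h2] := deg_count hdeg.
have hcard : #|verts Z| = #|Z| by move: hD0; rewrite /Delta; lia.
apply/andP; split; last by apply/forall_inP => v hv; rewrite h2.
have hC := comp_comp he0.
case: (eqVneq (cmp Z e0) Z) => hCZ; first by rewrite -hCZ; case/and3P: hC.
set C := cmp Z e0 in hC hCZ.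
have hCs : C \proper Z by rewrite properE comp_sub /=; apply: contra hCZ => h; rewrite eqEsubset comp_sub.
have hC0 : C != set0 by apply/set0Pn; exists e0; apply: comp_in.
have hR0 : Z :\: C != set0 by rewrite setD_eq0; apply: contra hCZ => h; rewrite eqEsubset comp_sub.
have hRs : Z :\: C \proper Z.
  rewrite properE subsetDl /=; apply/subsetPn; exists e0 => //; by rewrite /C in_setD comp_in.
have e1 : C :|: (Z :\: C) = Z by rewrite /C -{1}(setIidPr (comp_sub Z e0)) setID.
have hadd := Dadd (comp_split hC); rewrite e1 in hadd.
have := nosmall _ hCs hC0; have := nosmall _ hRs hR0; lia.
Qed.

Lemma verts_bigU (I : eqType) (s : seq I) (F : I -> {set E}) w :
  w \in verts (\bigcup_(i <- s) F i) -> exists2 j, j \in s & w \in verts (F j).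
Proof.
elim: s => [|i s IH]; first by rewrite big_nil verts0 inE.
rewrite big_cons vertsU => /setUP[h|/IH[j hj hw]]; first by exists i; rewrite ?mem_head.
by exists j; rewrite // in_cons hj orbT.
Qed.

Lemma Dseq (I : eqType) (s : seq I) (F : I -> {set E}) : uniq s ->
  (forall i j, i \in s -> j \in s -> i != j -> [disjoint verts (F i) & verts (F j)]) ->
  D (\bigcup_(i <- s) F i) = (\sum_(i <- s) D (F i))%R.
Proof.
elim: s => [|i s IH]; first by rewrite !big_nil D0.
move=> /andP[his hu] hd; rewrite !big_cons Dadd; last first.
  rewrite -setI_eq0; apply/eqP/setP => w; rewrite in_setI in_set0; apply/negP => /andP[hw1 /verts_bigU[j hj hw2]].
  have hij : i != j by apply: contraNneq his => ->.
  have hj' : j \in i :: s by rewrite in_cons hj orbT.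
  have := hd i j (mem_head _ _) hj' hij.
  rewrite -setI_eq0 => /eqP/setP/(_ w); by rewrite in_setI hw1 hw2 in_set0.
rewrite IH // => a b ha hb; apply: hd; by rewrite in_cons ?ha ?hb orbT.
Qed.

Lemma Dbig (I : finType) (P : pred I) (F : I -> {set E}) :
  (forall i j, P i -> P j -> i != j -> [disjoint verts (F i) & verts (F j)]) ->
  D (\bigcup_(i | P i) F i) = (\sum_(i | P i) D (F i))%R.
Proof.
move=> hd; rewrite -big_filter -[RHS]big_filter; apply: Dseq.
  by apply: filter_uniq; apply: index_enum_uniq.
by move=> i j; rewrite !mem_filter => /andP[hi _] /andP[hj _]; apply: hd.
Qed.


Definition kern A := odflt set0 [pick K | is_kernel ends A K].

Lemma kern_spec A : connectedb ends A -> (1 <= D A)%R -> is_kernel ends A (kern A).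
Proof.
move=> hA h1; rewrite /kern; case: pickP => [K hK //|hn].
by have [K hK] := kernel_exists hA h1; move: (hn K); rewrite hK.
Qed.

Lemma core_mem e : reflect (exists2 A, is_component ends setT A && (1 <= D A)%R & e \in kern A)
  (e \in core ends).
Proof.
rewrite /core inE; apply: (iffP existsP).
- case=> A /and3P[hc h1 /existsP[K /andP[hK he]]]; exists A; first by rewrite hc h1.
  case/compP: hc => _ hA _; by rewrite -(kernel_uniq hK (kern_spec hA h1)).
- case=> A /andP[hc h1] he; exists A; rewrite hc h1 /=; apply/existsP; exists (kern A).
  case/compP: hc => _ hA _; by rewrite he kern_spec.
Qed.

Lemma P1 : cacti ends (core ends).
Proof.
apply/andP; split.
- apply/forallP => v; apply/negP => /andP[/cards1P[e he] /forall_inP hloop].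
  have hec : e \in core ends by move/setP: he => /(_ e); rewrite !inE eqxx => /andP[].
  have hev : inc v e by move/setP: he => /(_ e); rewrite !inE eqxx => /andP[].
  case/core_mem: hec => A /andP[hc h1] heK.
  case/compP: (hc) => _ hA _.
  have hKc : forall f, f \in kern A -> f \in core ends by move=> f hf; apply/core_mem; exists A; rewrite ?hc.
  have := kernel_noleaf v hA h1 (kern_spec hA h1); case/negP; apply/andP; split.
    apply/cards1P; exists e; apply/setP => f; rewrite !inE.
    apply/andP/eqP => [[hf hi]|->]; last by [].
    by move/setP: he => /(_ f); rewrite in_set in_set1 (hKc f hf) hi => /esym/eqP.
  apply/forall_inP => f hf; exact: hloop (hKc f hf).
- apply/forallP => C; apply/implyP => hC; apply/negP => hcyc.
  case/compP: (hC) => hCc /connP[hC0 _] hcl.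
  have [e heC] := set0Pn _ hC0.
  case/core_mem: (subsetP hCc _ heC) => A /andP[hc h1] heK.
  case/compP: (hc) => _ hA _.
  have hK := kern_spec hA h1; case/kernelP: (hK) => _ hKA hKD hKmin.
  have hKc : forall f, f \in kern A -> f \in core ends by move=> f hf; apply/core_mem; exists A; rewrite ?hc.
  set K := kern A in heK hK hKA hKD hKmin hKc.
  set K1 := K :&: C; set K2 := K :\: C.
  have hdis : [disjoint verts K1 & verts K2].
    rewrite -setI_eq0; apply/eqP/setP => w; rewrite in_setI in_set0; apply/negP.
    move=> /andP[hw1 /vertsP[f]]; rewrite in_setD => /andP[hfC hfK] hi.
    have hw : w \in verts C by move: hw1; apply/subsetP/verts_sub/subsetIr.
    by rewrite (hcl f w (hKc f hfK) hw hi) in hfC.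
  have hU : K1 :|: K2 = K by rewrite setID.
  have hadd := Dadd hdis; rewrite hU in hadd.
  have [hC0' hCdeg] := cycle_D hcyc.
  have [hT3 _] := T3 (subsetIr K C) (fun v hv => eq_leq (esym (hCdeg v hv))).
  have hK2 : (D A <= D K2)%R by rewrite -hKD hadd; move: hT3; rewrite -/K1 hC0'; lia.
  have hK20 : K2 != set0 by apply: contraTneq hK2 => ->; rewrite D0 -ltNge; apply: lt_le_trans h1.
  have hK2A : K2 \subset A by apply: subset_trans (subsetDl _ _) hKA.
  have := hKmin K2 hK20 hK2A (le_anti _); rewrite hK2 (Gl hA hK2A hK20) => /(_ isT) /subsetP /(_ e heK).
  by rewrite in_setD heC.
Qed.


Lemma P2 H : cacti ends H -> H \subset core ends.
Proof.
case/andP => /forallP hnl /forallP hnc; apply/subsetP => h hh.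
set C := cmp H h; set A := cmp setT h.
have hC : is_component ends H C := comp_comp hh.
have hA : is_component ends setT A := comp_comp (in_setT h).
case/compP: (hC) => hCH hCc hclC; case/compP: (hA) => _ hAc _.
have hCA : C \subset A.
  apply/subsetP => f; rewrite /C /A !inE => /andP[hf hc]; rewrite /=.
  by apply: conn_mono hc; apply: subsetT.
have hCnl : forall v, ~~ is_leaf ends C v.
  move=> v; apply/negP => hl; case/negP: (hnl v).
  case/andP: (hl) => /cards1P[e he] /forall_inP hlp.
  have heC : e \in C by move/setP: he => /(_ e); rewrite in_set in_set1 eqxx => /andP[].
  have hev : inc v e by move/setP: he => /(_ e); rewrite in_set in_set1 eqxx => /andP[].
  have hvC : v \in verts C by apply/vertsP; exists e.
  have hS : [set f in H | inc v f] = [set f in C | inc v f].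
    apply/setP => f; rewrite [in LHS]in_set [in RHS]in_set; apply/andP/andP => [[hf hi]|[hf hi]]; split => //.
      exact: hclC hf hvC hi.
    exact: (subsetP hCH).
  apply/andP; split; first by rewrite hS; apply/cards1P; exists e.
  apply/forall_inP => f hf; apply/implyP => hi; have := hlp f (hclC f v hf hvC hi); by rewrite hi.
have hCcyc : ~~ is_cycle ends C by apply: (implyP (hnc C)).
have hC1 := noleaf_D hCc hCnl hCcyc.
have hC0 : C != set0 by apply/set0Pn; exists h; apply: comp_in.
have hA1 : (1 <= D A)%R by apply: le_trans hC1 (Gl hAc hCA hC0).
have hK := kern_spec hAc hA1; case/kernelP: (hK) => hK0 hKA hKD hKmin.
set K := kern A in hK hK0 hKA hKD hKmin.
have hsup := Dsuper K C.
have hU : (D (K :|: C) <= D A)%R.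
  apply: Gl => //; first by rewrite subUset hKA hCA.
  by apply/set0Pn; exists h; rewrite inE comp_in ?orbT.
have hI : (D C <= D (K :&: C))%R by move: hsup hU; rewrite hKD; lia.
have hdeg : forall v, v \in verts C -> (2 <= deg C v)%N by move=> v; apply: noleaf_deg.
have [_ hT3] := T3 (subsetIr K C) hdeg.
have hI0 : K :&: C != set0.
  by apply: contraTneq hI => ->; rewrite D0 -ltNge; apply: lt_le_trans hC1.
have hKC : K :&: C = C.
  apply/eqP; apply/negPn/negP => hne.
  have := touch hCc (subsetIr K C) hI0 hne => /hT3; by rewrite ltNge hI.
have hhK : h \in K by move: (comp_in hh); rewrite -/C -hKC => /setIP[].
apply/core_mem; exists A => //; by rewrite hA hA1.
Qed.


Lemma P3 : D (core ends) = D (nontree_part ends).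
Proof.
have ecore : core ends = \bigcup_(A | is_component ends setT A && (1 <= D A)%R) kern A.
  by apply/setP => e; apply/core_mem/bigcupP => -[A hA he]; exists A.
have ent : nontree_part ends = \bigcup_(A | is_component ends setT A && ~~ is_tree ends A) A.
  apply/setP => e; rewrite /nontree_part inE; apply/existsP/bigcupP.
    by case=> A /and3P[a b c]; exists A; rewrite ?a ?b.
  by case=> A /andP[a b] c; exists A; rewrite a b c.
rewrite ecore ent !Dbig; last 2 first.
- by move=> A B /andP[hA _] /andP[hB _] hne; exact: comp_disj hA hB hne.
- move=> A B /andP[hA h1] /andP[hB h2] hne; apply: disjointW (comp_disj hA hB hne).
    by apply: verts_sub; case/compP: hA => _ hAc _; case/kernelP: (kern_spec hAc h1).
  by apply: verts_sub; case/compP: hB => _ hBc _; case/kernelP: (kern_spec hBc h2).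
rewrite [LHS](eq_bigr (fun A => D A)); last first.
  by move=> A /andP[hA h1]; case/compP: hA => _ hAc _; case/kernelP: (kern_spec hAc h1).
rewrite big_mkcond [RHS]big_mkcond; apply: eq_bigr => A _.
case: (boolP (is_component ends setT A)) => hc //=; symmetry.
case/compP: (hc) => _ hAc _; have [hA0 _] := connP hAc.
case: (boolP (1 <= D A)%R) => h1.
  have [C hCA hCc] := cycle_exists hA0 (le_trans ler01 h1).
  suff -> : is_tree ends A = false by [].
  apply/negbTE/negP => /andP[_ /forallP /(_ C)]; by rewrite hCA hCc.
case: (boolP (is_tree ends A)) => ht //=.
have : (0 <= D A)%R.
  rewrite leNgt; apply/negP => hlt; case/negP: ht; apply/andP; split => //.
  apply/forallP => C; apply/implyP => hCA; apply/negP => hcyc.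
  have [hC0 _] := cycle_D hcyc; case/andP: hcyc => /connP[hC0' _] _.
  have := Gl hAc hCA hC0'; rewrite hC0; move: hlt; lia.
move: h1; lia.
Qed.


Lemma comp_noleaf X C : (forall v, ~~ is_leaf ends X v) -> is_component ends X C ->
  forall v, ~~ is_leaf ends C v.
Proof.
move=> hnl hC; case/compP: (hC) => hCH _ hclC.
  move=> v; apply/negP => hl; case/negP: (hnl v).
  case/andP: (hl) => /cards1P[e he] /forall_inP hlp.
  have heC : e \in C by move/setP: he => /(_ e); rewrite in_set in_set1 eqxx => /andP[].
  have hev : inc v e by move/setP: he => /(_ e); rewrite in_set in_set1 eqxx => /andP[].
  have hvC : v \in verts C by apply/vertsP; exists e.
  have hS : [set f in X | inc v f] = [set f in C | inc v f].
    apply/setP => f; rewrite [in LHS]in_set [in RHS]in_set; apply/andP/andP => [[hf hi]|[hf hi]]; split => //.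
      exact: hclC hf hvC hi.
    exact: (subsetP hCH).
  apply/andP; split; first by rewrite hS; apply/cards1P; exists e.
  apply/forall_inP => f hf; apply/implyP => hi; have := hlp f (hclC f v hf hvC hi); by rewrite hi.
Qed.

Lemma P4 H : cacti ends H -> D H = D (core ends) -> H = core ends.
Proof.
move=> hH hD; have c1 := P1; have hs := P2 hH.
case/andP: (c1) => /forallP hnl /forallP hnc.
have hdeg : forall v, v \in verts (core ends) -> (2 <= deg (core ends) v)%N.
  by move=> v; apply: noleaf_deg.
have [_ hlt] := T3 hs hdeg.
apply/eqP; apply/negPn/negP => hne.
have [d hd] : exists d, d \in core ends :\: H.
  apply/set0Pn; rewrite setD_eq0; apply: contra hne => h; by rewrite eqEsubset hs h.
move: (hd); rewrite in_setD => /andP[hdH hdc].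
set C := cmp (core ends) d.
have hC : is_component ends (core ends) C := comp_comp hdc.
case/compP: (hC) => hCc hCcon hcl.
have hX : C :&: H = set0.
  apply/eqP; apply/negPn/negP => hX0.
  have hXne : C :&: H != C.
    apply/eqP => h; move: (comp_in hdc); rewrite -/C -h => /setIP[_]; by rewrite (negbTE hdH).
  have [g hg [v hv hi]] := touch hCcon (subsetIl C H) hX0 hXne.
  have : (D H < D (core ends))%R.
    apply: hlt; exists g; last by exists v => //; move: hv; apply/subsetP/verts_sub/subsetIr.
    move: hg; rewrite !in_setD in_setI => /andP[hn hgC]; rewrite (subsetP hCc _ hgC) andbT.
    by move: hn; rewrite hgC.
  by rewrite hD ltxx.
have hdis : [disjoint verts H & verts C].
  rewrite -setI_eq0; apply/eqP/setP => w; rewrite in_setI in_set0; apply/negP => /andP[/vertsP[f hf hi] hw].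
  have hfC := hcl f w (subsetP hs _ hf) hw hi.
  by move/setP: hX => /(_ f); rewrite in_setI hfC hf in_set0.
have hC1 : (1 <= D C)%R.
  apply: noleaf_D => //; first exact: comp_noleaf hC.
  exact: (implyP (hnc C)).
have hadd := Dadd hdis.
have hsub : H :|: C \subset core ends by rewrite subUset hs hCc.
have [hle _] := T3 hsub hdeg.
move: hle; rewrite hadd hD; move: hC1; lia.
Qed.

End Main.

Unset Implicit Arguments. Set Strict Implicit.

Theorem mainTheorem6 (V E : finType) (ends : E -> V * V)
  (no_isolated : forall v : V, exists e : E, inc ends v e)
  (hG : exists A : {set E}, is_component ends setT A && two_cycles ends A)
  (F : {set E}) :
  (F = core ends <->
     (cacti ends F /\ forall H : {set E}, cacti ends H -> H \subset F)) /\
  (F = core ends <->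
     (cacti ends F /\ Delta ends F = Delta ends (nontree_part ends) /\
      forall H : {set E}, cacti ends H ->
        Delta ends H = Delta ends (nontree_part ends) -> H = F)).
Proof.
have c1 := P1 ends; have c2 := @P2 _ _ ends; have c3 := P3 ends; have c4 := @P4 _ _ ends.
split; split.
- by move=> ->; split.
- case=> hF hmax; apply/eqP; by rewrite eqEsubset c2 // hmax.
- move=> ->; split=> //; split=> // H hH hD; apply: c4 hH _; by rewrite hD c3.
- by case=> hF [hFD huniq]; symmetry; apply: huniq.
Qed.
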